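(* For a monoid $M$, the following statements are equivalent. (a) $M$ can be embedded into a free commutative monoid of finite rank. (b) $M$ has finite rank and can be embedded into a free commutative monoid (of possibly infinite rank). (c) There exists $d\in\mathbb{N}$ such that $M$ is isomorphic to a submonoid of $(\mathbb{N}^d,+)$ of rank $d$ (a maximal-rank submonoid).
   Context: Convention: all monoids are commutative, cancellative, and reduced (the identity $0$ is the only invertible element), and are written additively. $\mathrm{gp}(M)$ denotes the Grothendieck group of $M$, and the rank of $M$, $\mathrm{rank}(M)$, is the rank of the $\mathbb{Z}$-module $\mathrm{gp}(M)$ (i.e. $\dim_\mathbb{Q}\mathbb{Q}\otimes_\mathbb{Z}\mathrm{gp}(M)$). $\mathbb{N}=\{0,1,2,\dots\}$. *)

(* Defs.v *)
From Stdlib Require Import ZArith List ProofIrrelevance FunctionalExtensionality.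
From HB Require Import structures.
From mathcomp Require Import all_boot.
Set Implicit Arguments. Unset Strict Implicit. Unset Printing Implicit Defensive.

(* A monoid in the sense of the paper: commutative, cancellative, reduced,
   written additively. *)
Record cmonoid := CMonoid {
  carrier :> Type;
  mzero : carrier;
  madd : carrier -> carrier -> carrier;
  maddA : forall x y z, madd x (madd y z) = madd (madd x y) z;
  maddC : forall x y, madd x y = madd y x;
  madd0 : forall x, madd mzero x = x;
  mcancel : forall x y z, madd x y = madd x z -> y = z;
  mreduced : forall x y, madd x y = mzero -> x = mzero
}.

Definition is_hom (M N : cmonoid) (f : M -> N) : Prop :=
  f (mzero M) = mzero N /\ forall x y, f (madd x y) = madd (f x) (f y).

Definition embeds (M N : cmonoid) : Prop :=
  exists f : M -> N, is_hom f /\ forall x y, f x = f y -> x = y.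

Definition isomorphic (M N : cmonoid) : Prop :=
  exists (f : M -> N) (g : N -> M), is_hom f /\ cancel f g /\ cancel g f.

Fixpoint nsmul (M : cmonoid) (n : nat) (x : M) : M :=
  match n with O => mzero M | S k => madd x (nsmul k x) end.

(* Elements of gp(M) are represented by pairs (a, b), standing for a - b.
   For integer coefficients c_i, the relation  sum_i c_i (a_i - b_i) = 0 in gp(M)
   holds iff  lhs = rhs  in M (M cancellative), where c = c^+ - c^-. *)
Fixpoint gp_comb_lhs (M : cmonoid) (cs : list Z) (ps : list (M * M)) : M :=
  match cs, ps with
  | c :: cs', (a, b) :: ps' =>
      madd (madd (nsmul (Z.to_nat c) a) (nsmul (Z.to_nat (- c)) b))
           (gp_comb_lhs cs' ps')
  | _, _ => mzero M
  end.

Fixpoint gp_comb_rhs (M : cmonoid) (cs : list Z) (ps : list (M * M)) : M :=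
  match cs, ps with
  | c :: cs', (a, b) :: ps' =>
      madd (madd (nsmul (Z.to_nat c) b) (nsmul (Z.to_nat (- c)) a))
           (gp_comb_rhs cs' ps')
  | _, _ => mzero M
  end.

Definition gp_indep (M : cmonoid) (ps : list (M * M)) : Prop :=
  forall cs : list Z, length cs = length ps ->
    gp_comb_lhs cs ps = gp_comb_rhs cs ps -> Forall (fun c => c = 0%Z) cs.

(* rank(M) = rank of the Z-module gp(M) = maximal size of a Z-linearly
   independent family in gp(M). *)
Definition has_rank (M : cmonoid) (r : nat) : Prop :=
  (exists ps : list (M * M), length ps = r /\ gp_indep ps) /\
  (forall ps : list (M * M), gp_indep ps -> length ps <= r)%coq_nat.

Definition finite_rank (M : cmonoid) : Prop := exists r, has_rank M r.

Section FreeN.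
Variable d : nat.
Let T := {ffun 'I_d -> nat}.
Definition fN0 : T := [ffun=> 0%N].
Definition fNadd (f g : T) : T := [ffun i => (f i + g i)%N].

Lemma fNaddA x y z : fNadd x (fNadd y z) = fNadd (fNadd x y) z.
Proof. by apply/ffunP=> i; rewrite !ffunE addnA. Qed.
Lemma fNaddC x y : fNadd x y = fNadd y x.
Proof. by apply/ffunP=> i; rewrite !ffunE addnC. Qed.
Lemma fNadd0 x : fNadd fN0 x = x.
Proof. by apply/ffunP=> i; rewrite !ffunE. Qed.
Lemma fNcancel x y z : fNadd x y = fNadd x z -> y = z.
Proof.
move=> H; apply/ffunP=> i; have := congr1 (fun f : {ffun 'I_d -> nat} => f i) H.
by rewrite !ffunE => /eqP; rewrite eqn_add2l => /eqP.
Qed.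
Lemma fNreduced x y : fNadd x y = fN0 -> x = fN0.
Proof.
move=> H; apply/ffunP=> i; have := congr1 (fun f : {ffun 'I_d -> nat} => f i) H.
by rewrite !ffunE; case: (x i).
Qed.
End FreeN.

Definition freeN (d : nat) : cmonoid :=
  @CMonoid {ffun 'I_d -> nat} (fN0 d) (@fNadd d)
    (@fNaddA d) (@fNaddC d) (@fNadd0 d) (@fNcancel d) (@fNreduced d).

Lemma sig_eq_pi (A : Type) (P : A -> Prop) (x y : {a | P a}) :
  proj1_sig x = proj1_sig y -> x = y.
Proof.
case: x y => [a Ha] [b Hb] /= E; subst b.
by rewrite (proof_irrelevance _ Ha Hb).
Qed.

Section Sub.
Variables (M : cmonoid) (P : M -> Prop) (H0 : P (mzero M))
  (HD : forall x y, P x -> P y -> P (madd x y)).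
Let T := {x : M | P x}.
Definition sub0 : T := exist _ (mzero M) H0.
Definition subadd (x y : T) : T :=
  exist _ (madd (proj1_sig x) (proj1_sig y)) (HD (proj2_sig x) (proj2_sig y)).
Lemma subaddA x y z : subadd x (subadd y z) = subadd (subadd x y) z.
Proof. by apply: sig_eq_pi; rewrite /= maddA. Qed.
Lemma subaddC x y : subadd x y = subadd y x.
Proof. by apply: sig_eq_pi; rewrite /= maddC. Qed.
Lemma subadd0 x : subadd sub0 x = x.
Proof. by apply: sig_eq_pi; rewrite /= madd0. Qed.
Lemma subcancel x y z : subadd x y = subadd x z -> y = z.
Proof.
move=> H; apply: sig_eq_pi; have := congr1 (@proj1_sig _ _) H.
exact: mcancel.
Qed.
Lemma subreduced x y : subadd x y = sub0 -> x = sub0.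
Proof.
move=> H; apply: sig_eq_pi; have := congr1 (@proj1_sig _ _) H.
exact: mreduced.
Qed.
End Sub.

Definition submonoid (M : cmonoid) (P : M -> Prop) (H0 : P (mzero M))
  (HD : forall x y, P x -> P y -> P (madd x y)) : cmonoid :=
  @CMonoid {x : M | P x} (sub0 H0) (subadd HD)
    (@subaddA M P HD) (@subaddC M P HD) (@subadd0 M P H0 HD)
    (@subcancel M P HD) (@subreduced M P H0 HD).

Section FreeI.
Variable I : Type.
Definition finsupp (f : I -> nat) : Prop :=
  exists s : list I, forall i, f i <> 0%N -> List.In i s.
Let T := {f : I -> nat | finsupp f}.
Lemma finsupp0 : finsupp (fun _ => 0%N).
Proof. by exists nil. Qed.
Lemma finsuppD f g : finsupp f -> finsupp g -> finsupp (fun i => (f i + g i)%N).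
Proof.
move=> [s Hs] [t Ht]; exists (s ++ t) => i Hi; apply/in_or_app.
case E: (f i) => [|n] in Hi *; last by left; apply: Hs; rewrite E.
by right; apply: Ht.
Qed.
Definition fI0 : T := exist _ _ finsupp0.
Definition fIadd (f g : T) : T :=
  exist _ _ (finsuppD (proj2_sig f) (proj2_sig g)).
Lemma fIaddA x y z : fIadd x (fIadd y z) = fIadd (fIadd x y) z.
Proof. by apply: sig_eq_pi; apply: functional_extensionality => i /=; rewrite addnA. Qed.
Lemma fIaddC x y : fIadd x y = fIadd y x.
Proof. by apply: sig_eq_pi; apply: functional_extensionality => i /=; rewrite addnC. Qed.
Lemma fIadd0 x : fIadd fI0 x = x.
Proof. by apply: sig_eq_pi; apply: functional_extensionality => i. Qed.
Lemma fIcancel x y z : fIadd x y = fIadd x z -> y = z.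
Proof.
move=> H; apply: sig_eq_pi; apply: functional_extensionality => i.
have := congr1 (fun f => proj1_sig f i) H => /= /eqP.
by rewrite eqn_add2l => /eqP.
Qed.
Lemma fIreduced x y : fIadd x y = fI0 -> x = fI0.
Proof.
move=> H; apply: sig_eq_pi; apply: functional_extensionality => i.
have := congr1 (fun f => proj1_sig f i) H => /=.
by case: (proj1_sig x i).
Qed.
End FreeI.

Definition free_cmonoid (I : Type) : cmonoid :=
  @CMonoid {f : I -> nat | finsupp f} (@fI0 I) (@fIadd I)
    (@fIaddA I) (@fIaddC I) (@fIadd0 I) (@fIcancel I) (@fIreduced I).

(* Main.v *)
Require Import Defs.
From Stdlib Require Import ZArith List Lia Classical ClassicalEpsilon FunctionalExtensionality.
From HB Require Import structures.
From mathcomp Require Import all_boot zify.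
Set Implicit Arguments. Unset Strict Implicit.

Fixpoint lin (cs : list Z) (vs : list (nat -> Z)) (j : nat) : Z :=
  match cs, vs with
  | c :: cs', v :: vs' => (c * v j + lin cs' vs' j)%Z
  | _, _ => 0%Z
  end.

Lemma lin_app c1 c2 v1 v2 j : length c1 = length v1 ->
  lin (List.app c1 c2) (List.app v1 v2) j = (lin c1 v1 j + lin c2 v2 j)%Z.
Proof.
elim: c1 v1 => [|c c1 IH] [|v v1] //= [E]; rewrite IH //; lia.
Qed.

Lemma lin_scale a cs vs j : lin (List.map (Z.mul a) cs) vs j = (a * lin cs vs j)%Z.
Proof. elim: cs vs => [|c cs IH] [|v vs] //=; try lia; rewrite IH; ring. Qed.

Lemma lin_mapw a d v cs us j :
  lin cs (List.map (fun u => fun k => (a * u k - u d * v k)%Z) us) j =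
  (a * lin cs us j - lin cs us d * v j)%Z.
Proof. elim: cs us => [|c cs IH] [|u us] //=; try ring; rewrite IH; ring. Qed.

Lemma lin_zero cs vs j : (forall u, In u vs -> u j = 0%Z) -> lin cs vs j = 0%Z.
Proof.
elim: cs vs => [|c cs IH] [|u us] //= H.
rewrite (H u (or_introl erefl)) IH; first lia.
by move=> w Hw; apply: H; right.
Qed.

Lemma dep d : forall vs : list (nat -> Z), (d < length vs)%coq_nat ->
  exists cs, length cs = length vs /\ (exists c, In c cs /\ c <> 0%Z) /\
   forall j, (j < d)%coq_nat -> lin cs vs j = 0%Z.
Proof.
elim: d => [|d IH] vs Hl.
  case: vs Hl => [|v vs] /= Hl; first lia.
  exists (1%Z :: repeat 0%Z (length vs)); split; first by rewrite /= repeat_length.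
  split; last by move=> j; lia.
  by exists 1%Z; split; [left|lia].
case: (classic (exists v, In v vs /\ v d <> 0%Z)) => [[v [Hv Hvd]]|Hno].
  have [pre [post Evs]] := in_split _ _ Hv.
  set a := v d.
  set us := List.app pre post.
  set ws := List.map (fun u => fun k => (a * u k - u d * v k)%Z) us.
  have Hlw : (d < length ws)%coq_nat.
    by rewrite /ws length_map /us length_app; rewrite Evs length_app /= in Hl; lia.
  have [cs' [Hlc [[c [Hc Hc0]] Hz]]] := IH ws Hlw.
  have Hlc' : length cs' = (length pre + length post)%coq_nat
    by rewrite Hlc /ws length_map /us length_app.
  set c1 := firstn (length pre) cs'.
  set c2 := skipn (length pre) cs'.
  have Ec : cs' = List.app c1 c2 by rewrite firstn_skipn.
  have Hl1 : length c1 = length pre by rewrite /c1 length_firstn; lia.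
  exists (List.app (List.map (Z.mul a) c1) ((- lin cs' us d)%Z :: List.map (Z.mul a) c2)).
  split.
    rewrite Evs !length_app /= !length_map.
    have : length c2 = length post by rewrite /c2 length_skipn; lia.
    lia.
  split.
    rewrite Ec in Hc; case: (in_app_or _ _ _ Hc) => H.
      exists (a * c)%Z; split; first by apply: in_or_app; left; apply: in_map.
      by move/Z.mul_eq_0 => [].
    exists (a * c)%Z; split; first by apply: in_or_app; right; right; apply: in_map.
    by move/Z.mul_eq_0 => [].
  move=> j Hj.
  have E : lin (List.app (List.map (Z.mul a) c1) ((- lin cs' us d)%Z :: List.map (Z.mul a) c2)) vs j
         = lin cs' ws j.
    rewrite /ws lin_mapw Evs lin_app; last by rewrite length_map.
    rewrite /= !lin_scale Ec /us (lin_app _ _ j Hl1) (lin_app _ _ d Hl1); ring.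
  rewrite E.
  case: (Nat.eq_dec j d) => [->|Hjd]; last by apply: Hz; lia.
  rewrite /ws lin_mapw /a; ring.
have [cs [H1 [H2 H3]]] := IH vs ltac:(lia).
exists cs; split => //; split => // j Hj.
case: (Nat.eq_dec j d) => [->|Hjd]; last by apply: H3; lia.
apply: lin_zero => u Hu.
by apply: NNPP => Hn; apply: Hno; exists u.
Qed.

Definition fpair (M N : cmonoid) (f : M -> N) (p : M * M) : N * N := (f p.1, f p.2).

Lemma hom_nsmul (M N : cmonoid) (f : M -> N) n x : is_hom f ->
  f (nsmul n x) = nsmul n (f x).
Proof. move=> [H0 HD]; elim: n => [|n IH] //=; by rewrite HD IH. Qed.

Lemma hom_lhs (M N : cmonoid) (f : M -> N) cs ps : is_hom f ->
  f (gp_comb_lhs cs ps) = gp_comb_lhs cs (List.map (fpair f) ps).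
Proof.
move=> Hf; have [H0 HD] := Hf.
elim: cs ps => [|c cs IH] [|[a b] ps] //=.
by rewrite !HD IH !(hom_nsmul _ _ Hf).
Qed.

Lemma hom_rhs (M N : cmonoid) (f : M -> N) cs ps : is_hom f ->
  f (gp_comb_rhs cs ps) = gp_comb_rhs cs (List.map (fpair f) ps).
Proof.
move=> Hf; have [H0 HD] := Hf.
elim: cs ps => [|c cs IH] [|[a b] ps] //=.
by rewrite !HD IH !(hom_nsmul _ _ Hf).
Qed.

Lemma nsmulN d n (x : freeN d) o : (@nsmul (freeN d) n x) o = (n * x o)%N.
Proof. elim: n => [|n IH] /=; first by rewrite ffunE. by rewrite ffunE IH mulSn. Qed.

Definition vecof d (x : {ffun 'I_d -> nat}) (j : nat) : Z :=
  match (insub j : option 'I_d) with Some o => Z.of_nat (x o) | None => 0%Z end.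

Lemma vecof_ord d (x : {ffun 'I_d -> nat}) (o : 'I_d) : vecof x (val o) = Z.of_nat (x o).
Proof. by rewrite /vecof valK. Qed.

Lemma vecof_ext d (x y : {ffun 'I_d -> nat}) :
  (forall j, (j < d)%coq_nat -> vecof x j = vecof y j) -> x = y.
Proof.
move=> H; apply/ffunP => o; have := H (val o) (elimT ltP (ltn_ord o)).
rewrite !vecof_ord; exact: Nat2Z.inj.
Qed.

Definition pv d (p : freeN d * freeN d) : nat -> Z :=
  fun j => (vecof p.1 j - vecof p.2 j)%Z.

Lemma coordN d cs (qs : list (freeN d * freeN d)) (o : 'I_d) :
  (Z.of_nat ((gp_comb_lhs cs qs) o) - Z.of_nat ((gp_comb_rhs cs qs) o))%Z
  = lin cs (List.map (@pv d) qs) (val o).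
Proof.
elim: cs qs => [|c cs IH] [|[a b] qs] /=; try lia.
rewrite /fNadd !ffunE !nsmulN -IH /pv /= !vecof_ord; lia.

Qed.

Lemma rank_bound d (M : cmonoid) (f : M -> freeN d) : is_hom f ->
  (forall x y, f x = f y -> x = y) ->
  forall ps : list (M * M), gp_indep ps -> (length ps <= d)%coq_nat.
Proof.
move=> Hf Hi ps Hps.
case: (Nat.le_gt_cases (length ps) d) => // Hlt; exfalso.
have [cs [Hl [[c [Hc Hc0]] Hz]]] := @dep d (List.map (@pv d) (List.map (fpair f) ps))
  ltac:(by rewrite !length_map).
rewrite !length_map in Hl.
have E : gp_comb_lhs cs ps = gp_comb_rhs cs ps.
  apply: Hi; rewrite hom_lhs // hom_rhs //; apply/ffunP => o.
  have := coordN cs (List.map (fpair f) ps) o.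
  rewrite Hz; first by move/Z.sub_move_0_r; exact: Nat2Z.inj.
  by apply/ltP; exact: ltn_ord.
have := Hps cs Hl E; rewrite Forall_forall => H.
by apply: Hc0; apply: H.
Qed.

Lemma maxP (P : nat -> Prop) B : P 0 -> (forall n, P n -> (n <= B)%coq_nat) ->
  exists r, P r /\ forall n, P n -> (n <= r)%coq_nat.
Proof.
move=> P0; elim: B => [|B IH] HB.
  by exists 0; split.
case: (classic (P B.+1)) => HP; first by exists B.+1.
apply: IH => n Pn; have := HB n Pn.
case: (Nat.eq_dec n B.+1) => [E|]; [by rewrite E in Pn|lia].
Qed.

Lemma indep_nil (M : cmonoid) : gp_indep (nil : list (M * M)).
Proof. by move=> [|c cs] //= _ _; constructor. Qed.

Lemma finite_rank_of d (M : cmonoid) (f : M -> freeN d) : is_hom f ->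
  (forall x y, f x = f y -> x = y) -> finite_rank M.
Proof.
move=> Hf Hi.
set P := fun n => exists ps : list (M * M), length ps = n /\ gp_indep ps.
have P0 : P 0 by exists nil; split => //; exact: (@indep_nil M).
have HB : forall n, P n -> (n <= d)%coq_nat.
  by move=> n [qs [<- Hq]]; exact: rank_bound Hf Hi qs Hq.
have [r [[ps [Hl Hp]] Hr]] := maxP P0 HB.
exists r; split; first by exists ps.
by move=> qs Hq; apply: Hr; exists qs.
Qed.

Lemma lin_allzero cs vs j dv :
  (forall i, (i < length vs)%coq_nat -> (List.nth i vs dv) j = 0%Z) -> lin cs vs j = 0%Z.
Proof.
move=> H; apply: lin_zero => u Hu.
have [n [Hn <-]] := In_nth vs u dv Hu; exact: H.
Qed.

Lemma lin_single cs vs j i dv : length cs = length vs -> (i < length vs)%coq_nat ->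
  (forall i', (i' < length vs)%coq_nat -> i' <> i -> (List.nth i' vs dv) j = 0%Z) ->
  lin cs vs j = (List.nth i cs 0%Z * (List.nth i vs dv) j)%Z.
Proof.
elim: cs vs i => [|c cs IH] [|v vs] i //=; try lia.
move=> [Hl] Hi H.
case: i Hi H => [|i] Hi H /=.
  rewrite (@lin_allzero cs vs j dv); first lia.
  by move=> i' Hi'; apply: (H i'.+1); lia.
rewrite (IH vs i) //; last by move=> i' Hi' Hne; apply: (H i'.+1); lia.
  have := H 0 ltac:(lia) ltac:(lia) => /= ->; lia.
lia.
Qed.

Lemma diag_indep d (M : cmonoid) (f : M -> freeN d) (ps : list (M * M)) : is_hom f ->
  (forall i, (i < length ps)%coq_nat -> exists j, (j < d)%coq_nat /\
     pv (fpair f (List.nth i ps (mzero M, mzero M))) j <> 0%Z /\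
     forall i', (i' < length ps)%coq_nat -> i' <> i ->
       pv (fpair f (List.nth i' ps (mzero M, mzero M))) j = 0%Z) ->
  gp_indep ps.
Proof.
move=> Hf H cs Hl E; apply/Forall_nth => i d0 Hi.
rewrite (nth_indep _ _ 0%Z) //.
have Hi2 : (i < length ps)%coq_nat by rewrite -Hl.
have [j [Hj [Hne Hz]]] := H i Hi2.
have Hj' : j < d by apply/ltP.
have := coordN cs (List.map (fpair f) ps) (Ordinal Hj').
rewrite -hom_lhs // -hom_rhs // E Z.sub_diag /=.
set dflt := (mzero M, mzero M).
rewrite (@lin_single _ _ _ i (pv (fpair f dflt))); rewrite ?length_map //.
- rewrite !map_nth => /esym /Z.mul_eq_0 [] //.
- move=> i2 Hi3 Hne2; rewrite !map_nth; exact: Hz.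
Qed.

Lemma case1 d (M : cmonoid) (f : M -> freeN d) : is_hom f ->
  (forall x y, f x = f y -> x = y) ->
  (forall j, (j < d)%coq_nat -> exists x y : M, vecof (f x) j <> vecof (f y) j /\
     forall k, (k < d)%coq_nat -> k <> j -> vecof (f x) k = vecof (f y) k) ->
  has_rank M d.
Proof.
move=> Hf Hi HQ.
have Hc : forall j, exists p : M * M, (j < d)%coq_nat ->
   vecof (f p.1) j <> vecof (f p.2) j /\
     forall k, (k < d)%coq_nat -> k <> j -> vecof (f p.1) k = vecof (f p.2) k.
  move=> j; case: (classic (j < d)%coq_nat) => Hj.
    by have [x [y Hxy]] := HQ j Hj; exists (x, y).
  by exists (mzero M, mzero M).
pose P j := proj1_sig (constructive_indefinite_description _ (Hc j)).
have HP j : (j < d)%coq_nat -> vecof (f (P j).1) j <> vecof (f (P j).2) j /\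
     forall k, (k < d)%coq_nat -> k <> j -> vecof (f (P j).1) k = vecof (f (P j).2) k.
  exact: (proj2_sig (constructive_indefinite_description _ (Hc j))).
set ps := List.map P (List.seq 0 d).
have Hl : length ps = d by rewrite /ps length_map length_seq.
have Hn i : (i < d)%coq_nat -> List.nth i ps (mzero M, mzero M) = P i.
  move=> Hi'; rewrite /ps (nth_indep _ _ (P 0)); last by rewrite length_map length_seq.
  by rewrite map_nth seq_nth.
split; last by move=> qs Hq; exact: rank_bound Hf Hi qs Hq.
exists ps; split => //.
apply: diag_indep Hf _ => i Hi'; rewrite Hl in Hi'.
exists i; split => //; rewrite Hn // /pv /fpair /=.
have [H1 _] := HP i Hi'; split; first lia.
move=> i' Hi'' Hne; rewrite Hl in Hi''; rewrite Hn //=.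
have [_ H2] := HP i' Hi''; rewrite H2 //; lia.
Qed.

Lemma indep_reflect (M N : cmonoid) (F : M -> N) (ps : list (M * M)) : is_hom F ->
  gp_indep (List.map (fpair F) ps) -> gp_indep ps.
Proof.
move=> Hf H cs Hl E; apply: H; first by rewrite length_map.
by rewrite -hom_lhs // -hom_rhs // E.
Qed.

Lemma indep_inj (M N : cmonoid) (F : M -> N) (ps : list (M * M)) : is_hom F ->
  (forall x y, F x = F y -> x = y) ->
  gp_indep ps -> gp_indep (List.map (fpair F) ps).
Proof.
move=> Hf Hi H cs Hl E; rewrite length_map in Hl; apply: H => //.
by apply: Hi; rewrite hom_lhs // hom_rhs.
Qed.

Lemma iso_rank (M N : cmonoid) (F : M -> N) (G : N -> M) r : is_hom F ->
  cancel F G -> cancel G F -> has_rank M r -> has_rank N r.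
Proof.
move=> Hf FK GK [[ps [Hl Hp]] Hb]; split.
  exists (List.map (fpair F) ps); split; first by rewrite length_map.
  by apply: indep_inj => // x y /(congr1 G); rewrite !FK.
move=> qs Hq.
have E : qs = List.map (fpair F) (List.map (fpair G) qs).
  rewrite map_map; elim: qs {Hq} => [|[a b] qs IH] //=.
  by rewrite /fpair /= !GK -IH.
rewrite E in Hq; have := Hb _ (indep_reflect Hf Hq).
by rewrite !length_map.
Qed.

Definition concl (M : cmonoid) : Prop :=
  exists (d : nat) (P : freeN d -> Prop) (H0 : P (mzero (freeN d)))
           (HD : forall x y, P x -> P y -> P (madd x y)),
      has_rank (submonoid H0 HD) d /\ isomorphic M (submonoid H0 HD).

Lemma image_concl d (M : cmonoid) (f : M -> freeN d) : is_hom f ->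
  (forall x y, f x = f y -> x = y) -> has_rank M d -> concl M.
Proof.
move=> Hf Hi Hr; have [Hf0 HfD] := Hf.
pose P (z : freeN d) := exists x, f x = z.
have H0 : P (mzero (freeN d)) by exists (mzero M).
have HD : forall x y, P x -> P y -> P (madd x y).
  by move=> _ _ [x <-] [y <-]; exists (madd x y).
pose F (x : M) : submonoid H0 HD := exist P (f x) (ex_intro _ x erefl).
pose G (z : submonoid H0 HD) : M :=
  proj1_sig (constructive_indefinite_description _ (proj2_sig z)).
have HG z : f (G z) = proj1_sig z
  by exact: (proj2_sig (constructive_indefinite_description _ (proj2_sig z))).
have FK : cancel F G by move=> x; apply: Hi; rewrite HG.
have GK : cancel G F by move=> z; apply: sig_eq_pi; rewrite /= HG.
have HF : is_hom F.
  split; first by apply: sig_eq_pi; rewrite /= Hf0.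
  by move=> x y; apply: sig_eq_pi; rewrite /= HfD.
exists d, P, H0, HD; split; first exact: iso_rank HF FK GK Hr.
by exists F, G.
Qed.

Lemma delete d (M : cmonoid) (f : M -> freeN d.+1) : is_hom f ->
  (forall x y, f x = f y -> x = y) ->
  ~ (forall j, (j < d.+1)%coq_nat -> exists x y : M, vecof (f x) j <> vecof (f y) j /\
     forall k, (k < d.+1)%coq_nat -> k <> j -> vecof (f x) k = vecof (f y) k) ->
  exists g : M -> freeN d, is_hom g /\ forall x y, g x = g y -> x = y.
Proof.
move=> Hf Hi HQ; have [Hf0 HfD] := Hf.
have [j Hj] := not_all_ex_not _ _ HQ.
have [Hjd Hno] := imply_to_and _ _ Hj.
have Hjd' : j < d.+1 by apply/ltP.
pose J := Ordinal Hjd'.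
pose g (x : M) : freeN d := [ffun k : 'I_d => f x (lift J k)].
exists g; split.
  split; first by apply/ffunP => k; rewrite !ffunE Hf0 /= !ffunE.
  by move=> x y; apply/ffunP => k; rewrite /= !ffunE HfD /= !ffunE.
move=> x y Hxy; apply: Hi.
have Hk : forall k, (k < d.+1)%coq_nat -> k <> j -> vecof (f x) k = vecof (f y) k.
  move=> k Hk Hkj; have Hk' : k < d.+1 by apply/ltP.
  have HKJ : J != Ordinal Hk'.
    by apply/eqP => /(congr1 val) /= E; apply: Hkj.
  have [k' Ek _] := unlift_some HKJ.
  have := congr1 (fun h : {ffun 'I_d -> nat} => h k') Hxy.
  rewrite /g !ffunE -Ek => E.
  by rewrite -[k]/(val (Ordinal Hk')) !vecof_ord E.
apply: vecof_ext => k Hk'.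
case: (Nat.eq_dec k j) => [->|Hkj]; last exact: Hk.
apply: NNPP => Hne; apply: Hno; exists x, y; split => //.
Qed.

Lemma a_to_c d : forall (M : cmonoid) (f : M -> freeN d), is_hom f ->
  (forall x y, f x = f y -> x = y) -> concl M.
Proof.
elim: d => [|d IH] M f Hf Hi.
  apply: (image_concl Hf Hi); apply: case1 Hf Hi _ => j Hj; lia.
case: (classic (forall j, (j < d.+1)%coq_nat -> exists x y : M, vecof (f x) j <> vecof (f y) j /\
     forall k, (k < d.+1)%coq_nat -> k <> j -> vecof (f x) k = vecof (f y) k)) => HQ.
  exact: image_concl Hf Hi (case1 Hf Hi HQ).
have [g [Hg Hgi]] := delete Hf Hi HQ.
exact: IH g Hg Hgi.
Qed.

Lemma embeds_trans (M N K : cmonoid) : embeds M N -> embeds N K -> embeds M K.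
Proof.
move=> [f [[f0 fD] fi]] [g [[g0 gD] gi]]; exists (fun x => g (f x)); split.
  by split; [rewrite f0 g0| move=> x y; rewrite fD gD].
by move=> x y /gi /fi.
Qed.

Lemma mem_In (T : eqType) (s : seq T) x : x \in s -> In x s.
Proof.
elim: s => [|a s IH] //=; rewrite in_cons => /orP [/eqP ->|H]; [by left|right; exact: IH].
Qed.

Lemma freeN_free d : embeds (freeN d) (free_cmonoid 'I_d).
Proof.
have Hs : forall x : freeN d, finsupp (fun i : 'I_d => x i).
  by move=> x; exists (enum 'I_d) => i _; apply: mem_In; rewrite mem_enum.
exists (fun x => exist _ _ (Hs x) : free_cmonoid 'I_d); split.
  split; first by apply: sig_eq_pi; apply: functional_extensionality => i /=; rewrite ffunE.
  by move=> x y; apply: sig_eq_pi; apply: functional_extensionality => i /=; rewrite ffunE.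
move=> x y E; apply/ffunP => i.
exact: (congr1 (fun z => proj1_sig z i) E).
Qed.

Lemma nsmulI (I : Type) n (x : free_cmonoid I) j :
  proj1_sig (@nsmul (free_cmonoid I) n x) j = (n * proj1_sig x j)%N.
Proof. elim: n => [|n IH] //=; rewrite IH mulSn //. Qed.

Lemma vanish (I : Type) cs (qs : list (free_cmonoid I * free_cmonoid I)) j :
  (forall p, In p qs -> proj1_sig p.1 j = 0 /\ proj1_sig p.2 j = 0) ->
  proj1_sig (gp_comb_lhs cs qs) j = 0 /\ proj1_sig (gp_comb_rhs cs qs) j = 0.
Proof.
elim: cs qs => [|c cs IH] [|[a b] qs] //= H.
have [Ha Hb] := H (a, b) (or_introl erefl).
have [H1 H2] := IH qs (fun p Hp => H p (or_intror Hp)).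
by rewrite !nsmulI Ha Hb H1 H2 /= !muln0.
Qed.

Lemma nsmul0 (M : cmonoid) n : @nsmul M n (mzero M) = mzero M.
Proof. by elim: n => [|n IH] //=; rewrite IH madd0. Qed.

Lemma b_to_a (M : cmonoid) (I : Type) : finite_rank M -> embeds M (free_cmonoid I) ->
  exists d, embeds M (freeN d).
Proof.
move=> [r [[ps [Hl Hp]] Hb]] [f [Hf Hi]].
have [Hf0 HfD] := Hf.
have [S HS] : exists S : list I, forall p, In p ps -> forall j,
    (proj1_sig (f p.1) j <> 0 \/ proj1_sig (f p.2) j <> 0) -> In j S.
  elim: (ps) => [|[a b] qs [S HS]]; first by exists nil.
  have [sa Ha] := proj2_sig (f a); have [sb Hb'] := proj2_sig (f b).
  exists (List.app sa (List.app sb S)) => p [<-|Hq] j Hj.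
    case: Hj => /= Hj; apply: in_or_app; [by left; apply: Ha|right; apply: in_or_app; left; exact: Hb'].
  by apply: in_or_app; right; apply: in_or_app; right; exact: HS p Hq j Hj.
have Hsupp : forall x j, ~ In j S -> proj1_sig (f x) j = 0.
  move=> x j HjS.
  have Hn : ~ gp_indep ((x, mzero M) :: ps).
    by move=> H; have := Hb _ H; rewrite /= Hl; lia.
  have [cs Hcs] := not_all_ex_not _ _ Hn.
  have [Hlc Hcs'] := imply_to_and _ _ Hcs.
  have [E HnF] := imply_to_and _ _ Hcs'.
  clear Hcs Hcs'; case: cs Hlc E HnF => [|c cs] //= [Hlc] E HnF.
  case: (Z.eq_dec c 0) => Hc0.
    exfalso; apply: HnF; constructor => //.
    apply: Hp => //; move: E; rewrite Hc0 /= !madd0; exact: id.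
  have := congr1 (fun z => proj1_sig (f z) j) E.
  rewrite !HfD !(hom_nsmul _ _ Hf) Hf0 /= !nsmulI /=.
  have Hv : forall p, In p (List.map (fpair f) ps) ->
     proj1_sig p.1 j = 0 /\ proj1_sig p.2 j = 0.
    move=> p /in_map_iff [q [<- Hq]] /=.
    by split; apply: NNPP => Hne; apply: HjS; apply: (HS q Hq); first [by left|by right].
  have [H1 H2] := vanish cs Hv.
  rewrite -!hom_lhs // -!hom_rhs // in H1 H2.
  rewrite H1 H2 => Heq.
  nia.
pose g (x : M) : freeN (length S) :=
  [ffun o : 'I_(length S) => match nth_error S o with Some j => proj1_sig (f x) j | None => 0 end].
exists (length S), g; split.
  split.
    by apply/ffunP => o; rewrite !ffunE Hf0 /=; case: (nth_error S o).
  by move=> x y; apply/ffunP => o; rewrite /= !ffunE HfD /=; case: (nth_error S o).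
move=> x y Exy; apply: Hi; apply: sig_eq_pi; apply: functional_extensionality => j.
case: (classic (In j S)) => HjS; last by rewrite !Hsupp.
have [n Hn] := In_nth_error _ _ HjS.
have Hlt : (n < length S)%coq_nat by apply/nth_error_Some; rewrite Hn.
have Hlt' : n < length S by apply/ltP.
have := congr1 (fun h : {ffun 'I_(length S) -> nat} => h (Ordinal Hlt')) Exy.
by rewrite /g !ffunE /= Hn.
Qed.

Lemma c_to_a (M : cmonoid) : concl M -> exists d, embeds M (freeN d).
Proof.
move=> [d [P [H0 [HD [_ [F [G [[F0 FD] [FK GK]]]]]]]]].
exists d, (fun x => proj1_sig (F x)); split.
  by split; [rewrite F0|move=> x y; rewrite FD].
move=> x y E; rewrite -(FK x) -(FK y); congr G; exact: sig_eq_pi.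
Qed.

Unset Implicit Arguments.
Theorem mainTheorem1 (M : cmonoid) :
  ((exists d : nat, embeds M (freeN d)) <->
   (finite_rank M /\ exists I : Type, embeds M (free_cmonoid I))) /\
  ((finite_rank M /\ exists I : Type, embeds M (free_cmonoid I)) <->
   (exists (d : nat) (P : freeN d -> Prop) (H0 : P (mzero (freeN d)))
           (HD : forall x y, P x -> P y -> P (madd x y)),
      has_rank (submonoid H0 HD) d /\ isomorphic M (submonoid H0 HD))).
Proof.
have AB : (exists d : nat, embeds M (freeN d)) ->
   (finite_rank M /\ exists I : Type, embeds M (free_cmonoid I)).
  move=> [d Hd]; split.
    by have [f [Hf Hi]] := Hd; exact: finite_rank_of Hf Hi.
  by exists 'I_d; exact: embeds_trans Hd (freeN_free d).
have BA : (finite_rank M /\ exists I : Type, embeds M (free_cmonoid I)) ->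
   (exists d : nat, embeds M (freeN d)).
  by move=> [Hr [I HI]]; exact: b_to_a Hr HI.
split; first by split.
split.
  move=> /BA [d [f [Hf Hi]]]; exact: a_to_c Hf Hi.
by move=> Hc; apply: AB; exact: c_to_a Hc.
Qed.
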